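(* Let $q\ge 2$, $n$, $r\ge 1$, $\rho\ge 2$ and $d\ge 1$ be integers, and put $N=r+\rho-1$. Let $B(l,\rho)$, $l=0,1,2,\dots$, be a function with the following properties: (i) for every $l$, every $q$-ary code of length $l$ with minimum Hamming distance at least $\rho$ has at most $B(l,\rho)$ codewords; (ii) $B(0,\rho)=1$; (iii) $B(\cdot,\rho)$ is log-convex in $l$. Let $\mathcal{C}$ be a $q$-ary $(n,k,r,\rho)$ LRC code with minimum distance $d$, and let $$\mu=\mu(n,d,r,\rho):=\Big\lceil \frac{n-(d-1)}{N}\Big\rceil+1 .$$ Then $$k\le \mu\,\log_q B(N,\rho).$$
   Context: A $q$-ary code of length $n$ is a subset $\mathcal{C}\subseteq Q^n$ of a set $Q$ with $|Q|=q$; its minimum distance is the minimum Hamming distance between distinct codewords, and its dimension is $k=\log_q|\mathcal{C}|$ (not necessarily an integer). For $I\subseteq[n]=\{1,\dots,n\}$, $\mathcal{C}_I$ denotes the restriction (projection) of $\mathcal{C}$ to the coordinates in $I$. The code $\mathcal{C}$ of cardinality $q^k$ is an $(n,k,r,\rho)$ LRC code (has the $(\rho,r)$ locality property), $\rho\ge 2$, if every coordinate $i\in[n]$ is contained in a subset $\mathcal{R}_i\subseteq[n]$ of size at most $r+\rho-1$ such that the restricted code $\mathcal{C}_{\mathcal{R}_i}$ has minimum distance at least $\rho$. A positive function $f(j)$ of an integer argument is log-convex if $f(j_1)f(j_2)\le f(j_1-1)f(j_2+1)$ for all $j_1\le j_2$ in the support of $f$. *)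

(* Defs.v *)
From Stdlib Require Import Reals.
From mathcomp Require Import all_boot.
Set Implicit Arguments. Unset Strict Implicit. Unset Printing Implicit Defensive.

Definition dist_on (Q : finType) (n : nat) (I : {set 'I_n}) (x y : {ffun 'I_n -> Q}) : nat :=
  #|[set i in I | x i != y i]|.

Definition hdist (Q : finType) (n : nat) (x y : {ffun 'I_n -> Q}) : nat :=
  #|[set i | x i != y i]|.

(* the code has minimum distance at least rho (vacuous if |C| <= 1) *)
Definition min_dist_ge (Q : finType) (n : nat) (C : {set {ffun 'I_n -> Q}}) (rho : nat) : Prop :=
  forall x y, x \in C -> y \in C -> x != y -> rho <= hdist x y.

Definition has_min_dist (Q : finType) (n : nat) (C : {set {ffun 'I_n -> Q}}) (d : nat) : Prop :=
  min_dist_ge C d /\ exists x y, [/\ x \in C, y \in C, x != y & hdist x y = d].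

(* the restricted code C_I has minimum distance at least rho: two codewords
   whose restrictions to I are distinct differ in at least rho positions of I *)
Definition restr_min_dist_ge (Q : finType) (n : nat) (C : {set {ffun 'I_n -> Q}})
    (I : {set 'I_n}) (rho : nat) : Prop :=
  forall x y, x \in C -> y \in C -> 0 < dist_on I x y -> rho <= dist_on I x y.

Definition is_LRC (Q : finType) (n : nat) (C : {set {ffun 'I_n -> Q}}) (r rho : nat) : Prop :=
  forall i : 'I_n, exists R : {set 'I_n},
    [/\ i \in R, #|R| <= r + rho - 1 & restr_min_dist_ge C R rho].

Definition log_convex (f : nat -> R) : Prop :=
  (forall j, Rlt 0 (f j)) /\
  (forall j1 j2, 1 <= j1 -> j1 <= j2 -> Rle (Rmult (f j1) (f j2)) (Rmult (f (j1 - 1)) (f (j2 + 1)))).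

Definition logq (q : nat) (x : R) : R := Rdiv (ln x) (ln (INR q)).

Definition ceil_div (m a : nat) : nat := (m + a - 1) %/ a.

(* mu(n,d,r,rho) = ceil((n-(d-1))/N) + 1, N = r+rho-1 ; n - (d-1) >= 0 since d <= n *)
Definition mu (n d r rho : nat) : nat := ceil_div (n - (d - 1)) (r + rho - 1) + 1.

(* Main.v *)
Require Import Defs.
From Stdlib Require Import Reals.
From mathcomp Require Import all_boot.
Set Implicit Arguments. Unset Strict Implicit. Unset Printing Implicit Defensive.

Lemma card_bigcup_le (I T : finType) (A : {pred I}) (F : I -> {set T}) :
  #|\bigcup_(i in A) F i| <= \sum_(i in A) #|F i|.
Proof.
elim/big_rec2: _ => [|i m U _ H]; first by rewrite cards0.
apply: leq_trans (leq_card_setU _ _) _; by rewrite leq_add2l.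
Qed.

Lemma count_fibers (T U V : finType) (f : T -> U) (g : T -> V) (A : {set T}) K :
  (forall v, #|f @: [set x in A | g x == v]| <= K) -> #|f @: A| <= #|g @: A| * K.
Proof.
move=> HK.
have sub : f @: A \subset \bigcup_(v in g @: A) f @: [set x in A | g x == v].
  apply/subsetP => u /imsetP [a Ha ->].
  apply/bigcupP; exists (g a); first exact: imset_f.
  by apply: imset_f; rewrite inE Ha eqxx.
apply: leq_trans (subset_leq_card sub) _.
apply: leq_trans (card_bigcup_le _ _) _.
rewrite -sum_nat_const; exact: leq_sum.
Qed.

Lemma card_imset_factor (T U W : finType) (f : T -> U) (w : T -> W) (A : {set T}) :
  {in A &, forall a b, w a = w b -> f a = f b} -> #|f @: A| <= #|w @: A|.
Proof.
move=> H.
case: (set_0Vmem A) => [->|[a0 Ha0]]; first by rewrite !imset0 cards0.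
pose h z := if [pick a in A | w a == z] is Some a then f a else f a0.
have sub : f @: A \subset h @: (w @: A).
  apply/subsetP => u /imsetP [a Ha ->].
  apply/imsetP; exists (w a); first exact: imset_f.
  rewrite /h; case: pickP => [b /andP[Hb /eqP Hwb]|/(_ a)]; first by apply: H.
  by rewrite Ha eqxx.
exact: leq_trans (subset_leq_card sub) (leq_imset_card _ _).
Qed.

Definition proj (Q : finType) (n : nat) (S : {set 'I_n}) (x : {ffun 'I_n -> Q}) :
  {ffun 'I_n -> option Q} := [ffun i => if i \in S then Some (x i) else None].

Definition wrd (Q : finType) (n : nat) (A : {set 'I_n}) (x : {ffun 'I_n -> Q}) :
  {ffun 'I_#|A| -> Q} := [ffun j => x (enum_val j)].

Lemma fiber_code (Q : finType) n (C : {set {ffun 'I_n -> Q}}) (S R : {set 'I_n}) rho y :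
  restr_min_dist_ge C R rho ->
  #|proj (S :|: R) @: [set x in C | proj S x == y]|
     <= #|wrd (R :\: S) @: [set x in C | proj S x == y]|
  /\ min_dist_ge (wrd (R :\: S) @: [set x in C | proj S x == y]) rho.
Proof.
move=> HR.
have agreeS : forall a b, a \in [set x in C | proj S x == y] ->
    b \in [set x in C | proj S x == y] -> forall i, i \in S -> a i = b i.
  move=> a b; rewrite !inE => /andP[_ /eqP Ha] /andP[_ /eqP Hb] i Hi.
  have := congr1 (fun f : {ffun 'I_n -> option Q} => f i) (etrans Ha (esym Hb)).
  by rewrite !ffunE Hi => [[]].
split.
  apply: card_imset_factor => a b Ha Hb Hw.
  apply/ffunP => i; rewrite !ffunE.
  case: ifP => // /setUP [HiS|HiR]; first by rewrite (agreeS a b Ha Hb i HiS).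
  case: (boolP (i \in S)) => HiS; first by rewrite (agreeS a b Ha Hb i HiS).
  have HiD : i \in R :\: S by rewrite inE HiS HiR.
  move/ffunP: Hw => /(_ (enum_rank_in HiD i)).
  by rewrite !ffunE enum_rankK_in // => ->.
move=> u v /imsetP [a Ha ->] /imsetP [b Hb ->] Hneq.
have [Ca Cb] : a \in C /\ b \in C by move: Ha Hb; rewrite !inE => /andP[-> _] /andP[-> _].
have sub : [set i in R | a i != b i]
    \subset enum_val @: [set j | wrd (R :\: S) a j != wrd (R :\: S) b j].
  apply/subsetP => i; rewrite inE => /andP[HiR Hab].
  have HiS : i \notin S by apply: contra Hab => HiS; rewrite (agreeS a b Ha Hb i HiS).
  have HiD : i \in R :\: S by rewrite inE HiS HiR.
  apply/imsetP; exists (enum_rank_in HiD i); last by rewrite enum_rankK_in.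
  by rewrite inE !ffunE enum_rankK_in.
have le1 : dist_on R a b <= hdist (wrd (R :\: S) a) (wrd (R :\: S) b).
  rewrite /dist_on /hdist.
  apply: leq_trans (subset_leq_card sub) _.
  by rewrite card_imset //; exact: enum_val_inj.
apply: leq_trans le1.
apply: HR => //.
have [j Hj] : exists j, wrd (R :\: S) a j != wrd (R :\: S) b j.
  by apply/existsP; move: Hneq; apply: contraR => /existsPn H; apply/eqP/ffunP => j; apply/eqP; move: (H j); rewrite negbK.
apply/card_gt0P; exists (enum_val j).
move: Hj; rewrite !ffunE inE => ->.
by have := enum_valP j; rewrite inE => /andP[_ ->].
Qed.

From Stdlib Require Import Lra Lia Psatz.
From mathcomp Require Import zify.

Section RealLemmas.
Local Open Scope R_scope.

Lemma ln_le' x y : 0 < x -> x <= y -> ln x <= ln y.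
Proof.
move=> Hx [Hxy|->]; last by right.
by left; apply: ln_increasing.
Qed.

Lemma ln0 : ln 0 = 0.
Proof. rewrite /ln; case: Rlt_dec => // H; exfalso; lra. Qed.

Lemma ln_nat_ge0 k : 0 <= ln (INR k).
Proof.
case: k => [|k]; first by rewrite /= ln0; right.
rewrite -ln_1; apply: ln_le'; first lra.
rewrite S_INR; have := pos_INR k; lra.
Qed.

Lemma convex_ratio (g : nat -> R) : g 0%nat = 0 ->
  (forall j, 2 * g j.+1 <= g j + g j.+2) ->
  forall l, INR l.+1 * g l <= INR l * g l.+1.
Proof.
move=> g0 Hc; elim=> [|l IH]; first by rewrite g0 /=; lra.
have Hl := pos_INR l.
have Hc' := Hc l.
rewrite !S_INR in IH *.
nra.
Qed.

Lemma convex_chord (g : nat -> R) : g 0%nat = 0 ->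
  (forall j, 2 * g j.+1 <= g j + g j.+2) ->
  forall m l, INR (l + m) * g l <= INR l * g (l + m)%nat.
Proof.
move=> g0 Hc m l; elim: m => [|m IH]; first by rewrite addn0; right; ring.
have HR := convex_ratio g0 Hc (l + m).
rewrite addnS.
have Hl := pos_INR l.
case: (Nat.eq_dec (l + m) 0) => H0.
  have -> : l = 0%nat by lia.
  by rewrite g0 /=; lra.
have Hpos : 0 < INR (l + m) by apply: lt_0_INR; lia.
apply: (Rmult_le_reg_l (INR (l + m))) => //.
rewrite S_INR in HR *.
have A : (INR (l + m) + 1) * (INR (l + m) * g l) <= (INR (l + m) + 1) * (INR l * g (l + m)%nat).
  by apply: Rmult_le_compat_l => //; lra.
have B : INR l * ((INR (l + m) + 1) * g (l + m)%nat) <= INR l * (INR (l + m) * g (l + m).+1).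
  by apply: Rmult_le_compat_l.
nra.
Qed.

End RealLemmas.

Section RealLemmas2.
Local Open Scope R_scope.

Lemma chord_B (B : nat -> R) : (forall j, 0 < B j) -> B 0%N = 1 ->
  (forall j1 j2 : nat, (0 < j1)%N -> (j1 <= j2)%N ->
     B j1 * B j2 <= B (j1 - 1)%N * B (j2 + 1)%N) ->
  forall l N, (l <= N)%N -> INR N * ln (B l) <= INR l * ln (B N).
Proof.
move=> Bpos B0 Blc l N HlN.
pose g j := ln (B j).
have g0 : g 0%N = 0 by rewrite /g B0 ln_1.
have gc : forall j, 2 * g j.+1 <= g j + g j.+2.
  move=> j; have := Blc j.+1 j.+1 (ltn0Sn _) (leqnn _).
  rewrite subn1 addn1 /= => H.
  rewrite /g.
  have -> : 2 * ln (B j.+1) = ln (B j.+1) + ln (B j.+1) by ring.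
  rewrite -!ln_mult //; exact: ln_le' (Rmult_lt_0_compat _ _ (Bpos _) (Bpos _)) H.
have := convex_chord g0 gc (N - l) l.
by rewrite subnKC.
Qed.

Lemma step_real (new old K l N : nat) (bl bN : R) :
  (new <= old * K)%N -> INR K <= bl -> INR N * ln bl <= INR l * ln bN ->
  0 <= ln bN ->
  INR N * ln (INR new) <= INR N * ln (INR old) + INR l * ln bN.
Proof.
move=> Hn HK Hb HbN.
have H0 := pos_INR N; have H1 := pos_INR l.
have Hold := ln_nat_ge0 old.
case: new Hn => [|new] Hn.
  rewrite /= ln0 Rmult_0_r.
  have := Rmult_le_pos _ _ H0 Hold; have := Rmult_le_pos _ _ H1 HbN; lra.
have Ho : (0 < old)%N by case: old Hn {Hold} => //; rewrite mul0n.
have Hk : (0 < K)%N by case: K Hn {HK} => //; rewrite muln0.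
have Hon : 0 < INR old by apply: lt_0_INR; apply/ltP.
have Hkn : 0 < INR K by apply: lt_0_INR; apply/ltP.
have : ln (INR new.+1) <= ln (INR old) + ln bl.
  rewrite -ln_mult //; last lra.
  apply: ln_le'; first by apply: lt_0_INR; lia.
  apply: Rle_trans (_ : INR (old * K) <= _).
    by apply: le_INR; apply/leP.
  rewrite mult_INR; apply: Rmult_le_compat_l; lra.
move=> H.
have := Rmult_le_compat_l _ _ _ H0 H.
lra.
Qed.

Lemma comb_real (s l N : nat) (a b gN : R) :
  INR N * b <= INR N * a + INR l * gN -> INR N * a <= INR s * gN ->
  INR N * b <= INR (s + l) * gN.
Proof. move=> H1 H2; rewrite plus_INR; lra. Qed.

Lemma base_real (c N : nat) (gN : R) : (c <= 1)%N ->
  INR N * ln (INR c) <= INR 0 * gN.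
Proof.
case: c => [|[|c]] // _; rewrite /=.
  by rewrite ln0; right; ring.
by rewrite ln_1; right; ring.
Qed.

Lemma final_real (c s N mu q : nat) (bN : R) : (0 < N)%N -> (s <= N * mu)%N ->
  0 <= ln bN -> INR N * ln (INR c) <= INR s * ln bN -> (1 < q)%N ->
  logq q (INR c) <= INR mu * logq q bN.
Proof.
move=> HN Hs Hb H Hq.
have HNr : 0 < INR N by apply: lt_0_INR; apply/ltP.
have Hq' : 0 < ln (INR q).
  rewrite -ln_1; apply: ln_increasing; first lra.
  have : (1 < INR q) by apply: lt_1_INR; apply/ltP.
  done.
have Hsr : INR s <= INR N * INR mu by rewrite -mult_INR; apply: le_INR; apply/leP.
have H2 : INR N * ln (INR c) <= INR N * (INR mu * ln bN).
  apply: Rle_trans H _; rewrite -Rmult_assoc; apply: Rmult_le_compat_r => //.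
have H3 : ln (INR c) <= INR mu * ln bN by apply: Rmult_le_reg_l H2.
rewrite /logq /Rdiv -Rmult_assoc; apply: Rmult_le_compat_r => //.
by left; apply: Rinv_0_lt_compat.
Qed.

End RealLemmas2.

Theorem theorem1 (q n r rho d : nat) (Q : finType) (hQ : #|Q| = q)
  (hq : 2 <= q) (hr : 1 <= r) (hrho : 2 <= rho) (hd : 1 <= d)
  (B : nat -> R)
  (HB : forall (l : nat) (D : {set {ffun 'I_l -> Q}}),
          min_dist_ge D rho -> Rle (INR #|D|) (B l))
  (HB0 : B 0 = R1)
  (HBlc : log_convex B)
  (C : {set {ffun 'I_n -> Q}})
  (HC : is_LRC C r rho)
  (Hd : has_min_dist C d) :
  Rle (logq q (INR #|C|)) (Rmult (INR (mu n d r rho)) (logq q (B (r + rho - 1)))).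
Proof.
set N := r + rho - 1.
have N1 : 0 < N by rewrite /N; lia.
case: HBlc => Bpos Blc.
have chord := chord_B Bpos HB0 Blc.
have [q0 _] : exists q0 : Q, q0 \in Q by apply/card_gt0P; rewrite hQ; lia.
have Bge1 : forall l, Rle R1 (B l).
  move=> l; have := HB l [set [ffun _ => q0]].
  rewrite cards1 /=; apply => x y; rewrite !inE => /eqP -> /eqP ->; by rewrite eqxx.
have gN0 : Rle R0 (ln (B N)).
  have := ln_le' Rlt_0_1 (Bge1 N); rewrite ln_1; exact.
have step : forall S R, restr_min_dist_ge C R rho -> #|R| <= N ->
  Rle (Rmult (INR N) (ln (INR #|proj (S :|: R) @: C|)))
      (Rplus (Rmult (INR N) (ln (INR #|proj S @: C|))) (Rmult (INR #|R :\: S|) (ln (B N)))).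
  move=> S R HR HRN.
  pose K := \max_(v : {ffun 'I_n -> option Q}) #|proj (S :|: R) @: [set x in C | proj S x == v]|.
  have hK : #|proj (S :|: R) @: C| <= #|proj S @: C| * K.
    apply: count_fibers => v; rewrite /K. exact: leq_bigmax.
  have hKB : Rle (INR K) (B #|R :\: S|).
    rewrite /K.
    have [v0 ->] := eq_bigmax (fun v => #|proj (S :|: R) @: [set x in C | proj S x == v]|)
       (ltac:(by apply/card_gt0P; exists [ffun _ => None])).
    have [h1 h2] := fiber_code S v0 HR.
    apply: Rle_trans (HB _ _ h2); apply: le_INR; apply/leP; exact: h1.
  have hl : #|R :\: S| <= N by apply: leq_trans HRN; apply: subset_leq_card; apply: subsetDl.
  exact: step_real hK hKB (chord _ _ hl) gN0.
have greedy : forall k, k <= n -> exists S : {set 'I_n},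
    [/\ k <= #|S|, #|S| < k + N &
     Rle (Rmult (INR N) (ln (INR #|proj S @: C|))) (Rmult (INR #|S|) (ln (B N)))].
  elim=> [_|k IH Hk].
    exists set0; split => //; first by rewrite cards0 add0n.
    rewrite cards0; apply: base_real.
    rewrite -(cards1 [ffun _ : 'I_n => @None Q]); apply: subset_leq_card.
    apply/subsetP => u /imsetP [x _ ->]; rewrite inE; apply/eqP/ffunP => i.
    by rewrite !ffunE inE.
  have [S [HkS HSk HS]] := IH (ltnW Hk).
  case: (leqP k.+1 #|S|) => HS1.
    by exists S; split => //; apply: leq_trans HSk _; rewrite addSn.
  have eS : #|S| = k by lia.
  have [i Hi] : exists i, i \in ~: S.
    apply/card_gt0P; have := cardsC S; rewrite card_ord; lia.
  have [R [HiR HRN HR]] := HC i.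
  exists (S :|: R).
  have HiD : i \in R :\: S by rewrite inE in Hi; rewrite !inE Hi HiR.
  have cD : 0 < #|R :\: S| by apply/card_gt0P; exists i.
  have cU : #|S :|: R| = #|S| + #|R :\: S|.
    rewrite cardsU cardsD setIC.
    have := subset_leq_card (subsetIl R S); lia.
  split.
  - lia.
  - have : #|R :\: S| <= #|R| by apply: subset_leq_card; apply: subsetDl.
    rewrite -/N in HRN; lia.
  - rewrite cU; apply: comb_real (step S R HR HRN) HS.
have [S [HkS HSk HS]] := greedy (n - (d - 1)) (leq_subr _ _).
have inj : {in C &, injective (proj S)}.
  move=> a b Ca Cb Hab; apply/eqP; apply: contraT => Hne.
  have := Hd.1 a b Ca Cb Hne.
  have sub : [set i | a i != b i] \subset ~: S.
    apply/subsetP => i; rewrite !inE; apply: contra => HiS.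
    have := congr1 (fun f : {ffun 'I_n -> option Q} => f i) Hab.
    by rewrite !ffunE HiS => [[->]].
  rewrite /hdist => h3.
  have h4 : d <= #|~: S| by apply: leq_trans h3 (subset_leq_card sub).
  have h5 : #|S| + #|~: S| = n by rewrite cardsC card_ord.
  exfalso; lia.
rewrite (card_in_imset inj) in HS.
have HN := N1.
apply: final_real N1 _ gN0 HS hq.
rewrite /mu /ceil_div -/N.
have := divn_eq (n - (d - 1) + N - 1) N.
have := ltn_pmod (n - (d - 1) + N - 1) HN.
nia.
Qed.
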